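(* There is $m_0$ such that for every $m\ge m_0$ that is a power of $2$ and every function $f:\{0,1\}^N\to\{0,1\}$, $$C^{dt}_\oplus(f\circ\mathrm{IND}_m^N)\ge C^{dt}(f)\quad\text{and}\quad \mathrm{size}^{dt}_\oplus(f\circ\mathrm{IND}_m^N)\ge 2^{C^{dt}(f)}\ge\mathrm{size}^{dt}(f).$$
   Context: Let $m=2^\ell$. The function $f\circ\mathrm{IND}_m^N$ has Boolean input variables $x_{i,j'}$ ($i\in[N]$, $0\le j'<\ell$) and $y_{i,j}$ ($i\in[N]$, $0\le j<m$), and its value is $f(z)$ where $z_i=y_{i,x_i}$ and $x_i\in\{0,\dots,m-1\}$ is the number with binary representation $x_{i,\ell-1}\cdots x_{i,0}$. A parity decision tree is a rooted binary tree whose internal nodes are labeled by parities ($\mathbb{F}_2$-sums) of input variables, with out-edges labeled $0,1$, and whose leaves are labeled by outputs. $C^{dt}(f)$ and $\mathrm{size}^{dt}(f)$ are the minimum height and minimum number of leaves of an ordinary decision tree (querying single variables) computing $f$; $C^{dt}_\oplus$ and $\mathrm{size}^{dt}_\oplus$ are the corresponding measures for parity decision trees. *)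

(* Defs.v *)
From mathcomp Require Import all_boot.
From mathcomp Require Import boolp.
Set Implicit Arguments. Unset Strict Implicit. Unset Printing Implicit Defensive.

Section Trees.
Variable V : finType.

Inductive dtree := DLeaf of bool | DNode of V & dtree & dtree.

Inductive pdtree := PLeaf of bool | PNode of {set V} & pdtree & pdtree.

Fixpoint dt_eval (t : dtree) (x : {ffun V -> bool}) : bool :=
  match t with
  | DLeaf b => b
  | DNode v t0 t1 => if x v then dt_eval t1 x else dt_eval t0 x
  end.

Definition parity (S : {set V}) (x : {ffun V -> bool}) : bool :=
  odd (\sum_(v in S) x v).

Fixpoint pdt_eval (t : pdtree) (x : {ffun V -> bool}) : bool :=
  match t with
  | PLeaf b => b
  | PNode Q t0 t1 => if parity Q x then pdt_eval t1 x else pdt_eval t0 x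
  end.

Fixpoint dt_height (t : dtree) : nat :=
  match t with DLeaf _ => 0 | DNode _ t0 t1 => (maxn (dt_height t0) (dt_height t1)).+1 end.
Fixpoint pdt_height (t : pdtree) : nat :=
  match t with PLeaf _ => 0 | PNode _ t0 t1 => (maxn (pdt_height t0) (pdt_height t1)).+1 end.

Fixpoint dt_size (t : dtree) : nat :=
  match t with DLeaf _ => 1 | DNode _ t0 t1 => dt_size t0 + dt_size t1 end.
Fixpoint pdt_size (t : pdtree) : nat :=
  match t with PLeaf _ => 1 | PNode _ t0 t1 => pdt_size t0 + pdt_size t1 end.

Definition dt_computes (t : dtree) (f : {ffun V -> bool} -> bool) :=
  forall x, dt_eval t x = f x.
Definition pdt_computes (t : pdtree) (f : {ffun V -> bool} -> bool) :=
  forall x, pdt_eval t x = f x.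

Definition upd (a : {ffun V -> bool}) (v : V) (b : bool) : {ffun V -> bool} :=
  [ffun w => if w == v then b else a w].

Fixpoint build (f : {ffun V -> bool} -> bool) (s : seq V) (a : {ffun V -> bool}) : dtree :=
  match s with
  | [::] => DLeaf (f a)
  | v :: s' => DNode v (build f s' (upd a v false)) (build f s' (upd a v true))
  end.

Lemma build_eval f s a x :
  dt_eval (build f s a) x = f [ffun w => if w \in s then x w else a w].
Proof.
elim: s a => [|v s IH] a /=.
  by congr f; apply/ffunP => w; rewrite !ffunE.
have E : forall b, x v = b ->
  [ffun w => if w \in s then x w else upd a v b w] =
  [ffun w => if w \in v :: s then x w else a w].
  move=> b xb; apply/ffunP => w; rewrite !ffunE in_cons.
  case: eqP => [->|_] /=; first by rewrite xb; case: (v \in s).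
  by [].
by case xv: (x v); rewrite IH E.
Qed.

Lemma build_computes f : dt_computes (build f (enum V) [ffun=> false]) f.
Proof.
move=> x; rewrite build_eval; congr f; apply/ffunP => w.
by rewrite ffunE mem_enum.
Qed.

Fixpoint to_pdt (t : dtree) : pdtree :=
  match t with
  | DLeaf b => PLeaf b
  | DNode v t0 t1 => PNode [set v] (to_pdt t0) (to_pdt t1)
  end.

Lemma to_pdt_eval t x : pdt_eval (to_pdt t) x = dt_eval t x.
Proof.
elim: t => [b|v t0 IH0 t1 IH1] //=.
by rewrite /parity big_set1 oddb IH0 IH1.
Qed.

Lemma ex_dt_height f : exists n, `[< exists t, dt_computes t f /\ dt_height t = n >].
Proof. by exists (dt_height (build f (enum V) [ffun=> false])); apply/asboolP;
  eexists; split; [exact: build_computes|]. Qed.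
Lemma ex_dt_size f : exists n, `[< exists t, dt_computes t f /\ dt_size t = n >].
Proof. by exists (dt_size (build f (enum V) [ffun=> false])); apply/asboolP;
  eexists; split; [exact: build_computes|]. Qed.
Lemma ex_pdt_height f : exists n, `[< exists t, pdt_computes t f /\ pdt_height t = n >].
Proof.
exists (pdt_height (to_pdt (build f (enum V) [ffun=> false]))); apply/asboolP.
exists (to_pdt (build f (enum V) [ffun=> false])); split=> // x.
by rewrite to_pdt_eval; exact: build_computes.
Qed.
Lemma ex_pdt_size f : exists n, `[< exists t, pdt_computes t f /\ pdt_size t = n >].
Proof.
exists (pdt_size (to_pdt (build f (enum V) [ffun=> false]))); apply/asboolP.
exists (to_pdt (build f (enum V) [ffun=> false])); split=> // x.
by rewrite to_pdt_eval; exact: build_computes.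
Qed.

Definition C_dt f := ex_minn (ex_dt_height f).
Definition size_dt f := ex_minn (ex_dt_size f).
Definition C_pdt f := ex_minn (ex_pdt_height f).
Definition size_pdt f := ex_minn (ex_pdt_size f).

End Trees.

(* Variables of f o IND_m^N with m = 2^l:
   inl (i, j') is x_{i,j'} (0 <= j' < l), inr (i, j) is y_{i,j} (0 <= j < m). *)
Definition ind_var (N l : nat) : finType := (('I_N * 'I_l) + ('I_N * 'I_(2 ^ l)))%type.

Definition ind_addr N l (z : {ffun ind_var N l -> bool}) (i : 'I_N) : nat :=
  \sum_(j < l) z (inl (i, j)) * 2 ^ j.

(* z_i = y_{i, x_i} *)
Definition ind_out N l (z : {ffun ind_var N l -> bool}) (i : 'I_N) : bool :=
  [exists j : 'I_(2 ^ l), (nat_of_ord j == ind_addr z i) && z (inr (i, j))].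

Definition compose_IND N l (f : {ffun 'I_N -> bool} -> bool)
  (z : {ffun ind_var N l -> bool}) : bool :=
  f [ffun i => ind_out z i].

(* Main.v *)
Require Import Defs.
From mathcomp Require Import all_boot.
From mathcomp Require Import boolp.
From mathcomp Require Import zify.
Set Implicit Arguments. Unset Strict Implicit. Unset Printing Implicit Defensive.

Definition aff (V : finType) (F : {ffun V -> bool} -> bool) :=
  exists c S, forall z, F z = c (+) parity S z.

Lemma parity_xor (V : finType) (S : {set V}) z :
  parity S z = \big[addb/false]_(v in S) z v.
Proof.
rewrite /parity; elim/big_rec2: _ => //= v n b _ <-.
by rewrite oddD oddb.
Qed.

Lemma parity_sum (V : finType) (S : {set V}) z :
  parity S z = \big[addb/false]_v ((v \in S) && z v).
Proof.
rewrite parity_xor big_mkcond /=; apply: eq_bigr => v _.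
by case: (v \in S).
Qed.

Lemma aff_ext (V : finType) (F G : {ffun V -> bool} -> bool) :
  (forall z, F z = G z) -> aff F -> aff G.
Proof. by move=> E [c [S H]]; exists c, S => z; rewrite -E. Qed.

Lemma aff_const (V : finType) (c : bool) : aff (fun _ : {ffun V -> bool} => c).
Proof.
exists c, set0 => z; rewrite parity_xor big_pred0 ?addbF // => v.
by rewrite in_set0.
Qed.

Lemma aff_var (V : finType) (w : V) : aff (fun z : {ffun V -> bool} => z w).
Proof. by exists false, [set w] => z; rewrite parity_xor big_set1. Qed.

Lemma aff_xor (V : finType) (F G : {ffun V -> bool} -> bool) :
  aff F -> aff G -> aff (fun z => F z (+) G z).
Proof.
move=> [c1 [S1 H1]] [c2 [S2 H2]].
exists (c1 (+) c2), [set v | (v \in S1) (+) (v \in S2)] => z.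
rewrite H1 H2 !parity_sum.
have -> : \big[addb/false]_v ((v \in [set v | (v \in S1) (+) (v \in S2)]) && z v)
  = \big[addb/false]_v (((v \in S1) && z v) (+) ((v \in S2) && z v)).
  by apply: eq_bigr => v _; rewrite inE; case: (v \in S1); case: (v \in S2); case: (z v).
rewrite big_split /=.
by rewrite -!addbA; congr addb; rewrite addbCA.
Qed.

Lemma aff_bigseq (V : finType) (s : seq V) (P : pred V) (G : V -> {ffun V -> bool} -> bool) :
  (forall w, aff (G w)) -> aff (fun z => \big[addb/false]_(w <- s | P w) G w z).
Proof.
move=> HG; elim: s => [|w s IH].
  by apply: aff_ext (aff_const _ false) => z; rewrite big_nil.
case Pw: (P w).
  apply: aff_ext (aff_xor (HG w) IH) => z; by rewrite big_cons Pw.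
by apply: aff_ext IH => z; rewrite big_cons Pw.
Qed.

Lemma parity_aff (V : finType) (sg : {ffun V -> bool} -> {ffun V -> bool}) :
  (forall w, aff (fun z => sg z w)) -> forall R, aff (fun z => parity R (sg z)).
Proof.
move=> H R.
have := aff_bigseq (index_enum V) (fun w => w \in R) H.
by apply: aff_ext => z; rewrite parity_xor.
Qed.

Lemma pdt_comp (V : finType) (sg : {ffun V -> bool} -> {ffun V -> bool}) :
  (forall w, aff (fun z => sg z w)) -> forall t : pdtree V, exists t',
  pdt_size t' = pdt_size t /\ pdt_height t' = pdt_height t /\
  forall z, pdt_eval t' z = pdt_eval t (sg z).
Proof.
move=> H; elim=> [b|Q t0 [t0' [s0 [h0 e0]]] t1 [t1' [s1 [h1 e1]]]].
  by exists (PLeaf V b).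
have [c [S HS]] := parity_aff H Q.
case: c HS => HS.
  exists (PNode S t1' t0'); rewrite /= s0 s1 h0 h1 addnC maxnC; split=> //; split=> // z.
  by rewrite HS e0 e1; case: (parity S z).
exists (PNode S t0' t1'); rewrite /= s0 s1 h0 h1; split=> //; split=> // z.
by rewrite HS e0 e1.
Qed.

Lemma sum_bits_lt n (F : 'I_n -> bool) : \sum_(j < n) F j * 2 ^ j < 2 ^ n.
Proof.
elim: n F => [|n IH] F; first by rewrite big_ord0.
rewrite big_ord_recr /=.
have h1 := IH (fun j => F (widen_ord (leqnSn n) j)).
have h2 : F ord_max * 2 ^ n <= 2 ^ n by case: (F ord_max); rewrite ?mul1n ?mul0n.
rewrite expnS; move: h1 h2; set X := 2 ^ n; set Y := F ord_max * X; set Z := \sum_(i < n) _; lia.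
Qed.

Lemma addr_lt N l (z : {ffun ind_var N l -> bool}) i : ind_addr z i < 2 ^ l.
Proof. exact: sum_bits_lt. Qed.

Lemma ind_out_const N l (z : {ffun ind_var N l -> bool}) i b :
  (forall k : 'I_(2 ^ l), nat_of_ord k = ind_addr z i -> z (inr (i, k)) = b) ->
  ind_out z i = b.
Proof.
move=> H; rewrite /ind_out.
have -> : [exists j : 'I_(2 ^ l), (nat_of_ord j == ind_addr z i) && z (inr (i, j))]
  = [exists j : 'I_(2 ^ l), (nat_of_ord j == ind_addr z i) && b].
  apply: eq_existsb => k; case: eqP => //= /H ->; done.
case: b {H}; last by apply/existsP => [[k]]; rewrite andbF.
by apply/existsP; exists (Ordinal (addr_lt z i)); rewrite eqxx.
Qed.

Definition blk N l (v : ind_var N l) : 'I_N :=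
  match v with inl p => p.1 | inr p => p.1 end.

Lemma ind_out_local N l (z z' : {ffun ind_var N l -> bool}) i :
  (forall w, blk w = i -> z w = z' w) -> ind_out z i = ind_out z' i.
Proof.
move=> H; rewrite /ind_out /ind_addr.
have -> : \sum_(j < l) z (inl (i, j)) * 2 ^ j = \sum_(j < l) z' (inl (i, j)) * 2 ^ j.
  by apply: eq_bigr => j _; rewrite H.
by apply: eq_existsb => k; rewrite H.
Qed.

Definition stval N l (v : ind_var N l) (b : bool) (w : ind_var N l) : bool :=
  match w with
  | inr _ => b
  | inl p => match v with inl _ => false | inr q => (nat_of_ord q.2 == 0) && (nat_of_ord p.2 == 0) end
  end.

Lemma stifle N l (lgt0 : 0 < l) (v : ind_var N l) b (z : {ffun ind_var N l -> bool}) :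
  (forall w, blk w = blk v -> w != v -> z w = stval v b w) -> ind_out z (blk v) = b.
Proof.
move=> H; apply: ind_out_const => k hk.
move: hk; case: v H => [[i j]|[i j]] H /= hk; first by rewrite (H (inr (i, k))).
have ha : ind_addr z i = (nat_of_ord j == 0).
  rewrite /ind_addr.
  under eq_bigr => j' _ do rewrite (H (inl (i, j'))) //=.
  case: eqP => hj /=.
    rewrite (bigD1 (Ordinal lgt0)) //= big1 ?addn0 // => j' hj'.
    case: eqP => //= hj0; case/eqP: hj'; exact: val_inj.
  by rewrite big1.
apply: (H (inr (i, k))) => //; apply/eqP => -[] /(congr1 val) /= hkj.
move: hk; rewrite ha -hkj; case: eqP => /= [->|]; [done|by case: (nat_of_ord j) => [|[]]].
Qed.

Definition fix1 (V : finType) (z : {ffun V -> bool}) (v : V) (b : bool) (g : V -> bool)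
  (P : V -> bool) : {ffun V -> bool} :=
  [ffun w => if P w then g w else z w].

Definition sig N l (v : ind_var N l) (b a : bool) (Q : {set ind_var N l})
  (z : {ffun ind_var N l -> bool}) : {ffun ind_var N l -> bool} :=
  let z1 := [ffun w => if (blk w == blk v) && (w != v) then stval v b w else z w] in
  [ffun w => if w == v then a (+) parity (Q :\ v) z1 else z1 w].

Lemma parityD1 (V : finType) (Q : {set V}) v x : v \in Q ->
  parity Q x = x v (+) parity (Q :\ v) x.
Proof.
move=> vQ; rewrite !parity_xor (bigD1 v) //=; congr addb.
by apply: eq_bigl => w; rewrite in_setD1 andbC.
Qed.

Lemma sig_parity N l v b a (Q : {set ind_var N l}) z : v \in Q -> parity Q (@sig N l v b a Q z) = a.
Proof.
move=> vQ; rewrite (parityD1 _ vQ) /sig ffunE eqxx.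
set z1 := [ffun w => _].
have -> : parity (Q :\ v) [ffun w => if w == v then a (+) parity (Q :\ v) z1 else z1 w]
  = parity (Q :\ v) z1.
  rewrite !parity_xor; apply: eq_bigr => w; rewrite in_setD1 ffunE => /andP [/negbTE -> _].
  done.
by rewrite -addbA addbb addbF.
Qed.

Lemma sig_out N l (lgt0 : 0 < l) (v : ind_var N l) b a Q z :
  [ffun i => ind_out (@sig N l v b a Q z) i] = upd [ffun i => ind_out z i] (blk v) b.
Proof.
apply/ffunP => i; rewrite !ffunE; case: eqP => [->|ne].
  apply: stifle => // w bw wv; rewrite /sig !ffunE bw eqxx wv (negbTE wv) //=.
apply: ind_out_local => w bw.
have wv : w != v by apply/eqP => E; apply: ne; rewrite -bw E.
rewrite /sig !ffunE (negbTE wv) bw; case: eqP => //= E; case: ne; done.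
Qed.

Lemma sig_aff N l (v : ind_var N l) b a Q w : aff (fun z => @sig N l v b a Q z w).
Proof.
have H1 : forall w', aff (fun z : {ffun ind_var N l -> bool} =>
   [ffun w => if (blk w == blk v) && (w != v) then stval v b w else z w] w').
  move=> w'; case c : ((blk w' == blk v) && (w' != v)).
    by apply: aff_ext (aff_const _ (stval v b w')) => z; rewrite ffunE c.
  by apply: aff_ext (aff_var w') => z; rewrite ffunE c.
case: (eqVneq w v) => [->|wv].
  have := aff_xor (aff_const _ a) (parity_aff H1 (Q :\ v)).
  move=> h; apply: (aff_ext _ h) => z; by rewrite /sig ffunE eqxx.
have h := H1 w; apply: (aff_ext _ h) => z; by rewrite /sig !ffunE (negbTE wv).
Qed.

Lemma C_dt_le (V : finType) (t : dtree V) f : dt_computes t f -> C_dt f <= dt_height t.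
Proof.
move=> H; rewrite /C_dt; case: ex_minnP => m _ Hm; apply: Hm.
by apply/asboolP; exists t.
Qed.

Lemma C_dt_tree (V : finType) f : exists t : dtree V, dt_computes t f /\ dt_height t = C_dt f.
Proof. by rewrite /C_dt; case: ex_minnP => m /asboolP [t [H1 H2]] _; exists t. Qed.

Definition fixf (V : finType) (f : {ffun V -> bool} -> bool) i b :=
  fun x => f (upd x i b).

Lemma upd_id (V : finType) (x : {ffun V -> bool}) i : upd x i (x i) = x.
Proof. by apply/ffunP => w; rewrite ffunE; case: eqP => // ->. Qed.

Lemma C_dt_node (V : finType) f (i : V) : exists b, C_dt f <= (C_dt (fixf f i b)).+1.
Proof.
have [t0 [c0 h0]] := C_dt_tree (fixf f i false).
have [t1 [c1 h1]] := C_dt_tree (fixf f i true).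
have H : C_dt f <= dt_height (DNode i t0 t1).
  apply: C_dt_le => x /=; rewrite c0 c1 /fixf.
  by case E: (x i); rewrite -E upd_id.
move: H => /=; rewrite h0 h1.
case: (leqP (C_dt (fixf f i false)) (C_dt (fixf f i true))) => h.
  by move=> H; exists true.
by move=> H; exists false.
Qed.

Definition liftz N l (x : {ffun 'I_N -> bool}) : {ffun ind_var N l -> bool} :=
  [ffun w => match w with inl _ => false | inr p => x p.1 end].

Lemma liftz_out N l x : [ffun i => ind_out (@liftz N l x) i] = x.
Proof.
by apply/ffunP => i; rewrite ffunE; apply: ind_out_const => k _; rewrite ffunE.
Qed.

Lemma main N l (lgt0 : 0 < l) n : forall (T : pdtree (ind_var N l)) f,
  pdt_height T <= n -> pdt_computes T (@compose_IND N l f) -> 2 ^ C_dt f <= pdt_size T.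
Proof.
elim: n => [|n IH] [c|Q t0 t1] f //= hT HT.
- have : C_dt f <= dt_height (DLeaf 'I_N c).
    by apply: C_dt_le => x /=; rewrite -(liftz_out l x); exact: (HT (@liftz N l x)).
  by rewrite leqn0 => /eqP ->.
- have : C_dt f <= dt_height (DLeaf 'I_N c).
    by apply: C_dt_le => x /=; rewrite -(liftz_out l x); exact: (HT (@liftz N l x)).
  by rewrite leqn0 => /eqP ->.
have h0 : pdt_height t0 <= n by move: hT; rewrite ltnS geq_max => /andP [].
have h1 : pdt_height t1 <= n by move: hT; rewrite ltnS geq_max => /andP [].
case: (pickP (mem Q)) => [v vQ | Q0].
  have [b Hb] := C_dt_node f (blk v).
  have key : forall a, 2 ^ C_dt (fixf f (blk v) b) <= pdt_size (if a then t1 else t0).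
    move=> a.
    have [t' [s' [h' e']]] := pdt_comp (@sig_aff N l v b a Q) (if a then t1 else t0).
    rewrite -s'; apply: (IH t') => [|z]; first by rewrite h'; case: (a) h0 h1.
    rewrite e' /compose_IND /fixf; have := HT (sig v b a Q z).
    rewrite /= sig_parity // /compose_IND sig_out // => E; rewrite -E; by case: (a).
  have k0 := key false; have k1 := key true.
  apply: leq_trans (_ : 2 ^ (C_dt (fixf f (blk v) b)).+1 <= _).
    by rewrite leq_exp2l.
  by rewrite expnS mul2n -addnn /=; apply: leq_add.
have E : forall z, parity Q z = false.
  by move=> z; rewrite parity_xor big_pred0.
apply: leq_trans (leq_addr _ _); apply: IH => // z.
by rewrite -HT /= E.
Qed.

Lemma pdt_size_height (V : finType) (t : pdtree V) : pdt_size t <= 2 ^ pdt_height t.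
Proof.
elim: t => [//|Q t0 IH0 t1 IH1] /=; rewrite expnS mul2n -addnn.
apply: leq_add.
  by apply: leq_trans IH0 _; apply: leq_pexp2l => //; apply: leq_maxl.
by apply: leq_trans IH1 _; apply: leq_pexp2l => //; apply: leq_maxr.
Qed.

Lemma dt_size_height (V : finType) (t : dtree V) : dt_size t <= 2 ^ dt_height t.
Proof.
elim: t => [//|Q t0 IH0 t1 IH1] /=; rewrite expnS mul2n -addnn.
apply: leq_add.
  by apply: leq_trans IH0 _; apply: leq_pexp2l => //; apply: leq_maxl.
by apply: leq_trans IH1 _; apply: leq_pexp2l => //; apply: leq_maxr.
Qed.

Theorem theorem18 : exists m0 : nat, forall l : nat, m0 <= 2 ^ l ->
  forall (N : nat) (f : {ffun 'I_N -> bool} -> bool),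
    C_dt f <= C_pdt (@compose_IND N l f) /\
    2 ^ C_dt f <= size_pdt (@compose_IND N l f) /\
    size_dt f <= 2 ^ C_dt f.
Proof.
exists 2 => l hl N f.
have lgt0 : 0 < l by case: l hl.
split; [|split].
- rewrite /C_pdt; case: ex_minnP => m /asboolP [T [HT <-]] _.
  have H := @main N l lgt0 _ T _ (leqnn _) HT.
  rewrite -(@leq_exp2l 2) //; apply: leq_trans H _; exact: pdt_size_height.
- rewrite /size_pdt; case: ex_minnP => m /asboolP [T [HT <-]] _.
  exact: (@main N l lgt0 _ T _ (leqnn _) HT).
- have [t [c h]] := C_dt_tree f.
  rewrite -h; apply: leq_trans (dt_size_height t).
  rewrite /size_dt; case: ex_minnP => m _ Hm; apply: Hm.
  by apply/asboolP; exists t.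
Qed.
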